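(* Let $d\ge 2$, let $K$ be a hemisphere of $S^d$ and let $p\in \mathrm{bd}(K)$. Let $pq\subset K$ be an arc orthogonal to $\mathrm{bd}(K)$ at $p$, with $q$ in the interior of $K$ and $|pq|<\frac{\pi}{2}$. Consider all lunes of the form $K\cap M$, where $M$ is a hemisphere with $q\in\mathrm{bd}(M)$ and $p\in M$ (so that $pq\subset K\cap M$). Let $K_\perp$ be the hemisphere with $q\in \mathrm{bd}(K_\perp)$ and $p\in K_\perp$ such that $pq$ is orthogonal to $\mathrm{bd}(K_\perp)$ at $q$. Then among all these lunes, $K\cap K_\perp$ has the smallest thickness.
   Context: $S^d$ is the unit sphere in $E^{d+1}$. For non-antipodal points $a,b$, the arc $ab$ is the shorter great-circle arc joining them and $|ab|$ is its length (the spherical distance). A hemisphere is the intersection of $S^d$ with a closed half-space of $E^{d+1}$ whose boundary hyperplane passes through the origin; its center is the point of the hemisphere at distance $\frac{\pi}{2}$ from its boundary. If hemispheres $G,H$ are different and not opposite (opposite means their centers are antipodal), $L=G\cap H$ is a lune; $G/H$ and $H/G$ denote the parts of $\mathrm{bd}(G)$ and $\mathrm{bd}(H)$ contained in $G\cap H$ (these are $(d-1)$-dimensional hemispheres, i.e., sets of points of a $(d-1)$-dimensional great sphere at distance at most $\frac{\pi}{2}$ from a point, called the center). The thickness $\Delta(L)$ of the lune is the spherical distance between the centers of $G/H$ and $H/G$. *)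

(* Defs.v *)
(* classical reals. Points of E^{d+1} are represented as
   functions nat -> R; only coordinates 0..d are relevant (every notion
   below only inspects those coordinates). *)
From Stdlib Require Import Reals.
Open Scope R_scope.

Definition vec := nat -> R.

Definition dot (d : nat) (x y : vec) : R := sum_f_R0 (fun i => x i * y i) d.

Definition veq (d : nat) (x y : vec) : Prop := forall i, (i <= d)%nat -> x i = y i.

Definition on_sphere (d : nat) (x : vec) : Prop := dot d x x = 1.

Definition sdist (d : nat) (a b : vec) : R := acos (dot d a b).

(* The closed hemisphere with center c (c a unit vector):
   S^d intersected with the closed half-space {x | <c,x> >= 0}. *)
Definition hemi (d : nat) (c : vec) (x : vec) : Prop := on_sphere d x /\ 0 <= dot d c x.
Definition bd_hemi (d : nat) (c : vec) (x : vec) : Prop := on_sphere d x /\ dot d c x = 0.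
Definition int_hemi (d : nat) (c : vec) (x : vec) : Prop := on_sphere d x /\ 0 < dot d c x.

Definition arc (d : nat) (a b : vec) (x : vec) : Prop :=
  on_sphere d x /\ exists l m : R, 0 <= l /\ 0 <= m /\
     veq d x (fun i => l * a i + m * b i).

(* The arc ab is orthogonal at a to the great sphere bd(hemi n) (with a on it):
   the tangent vector of the arc at a, namely b - <a,b> a, is orthogonal to
   every tangent vector of the great sphere bd(hemi n) at a. *)
Definition arc_orth_at (d : nat) (a b n : vec) : Prop :=
  forall v : vec, dot d v n = 0 -> dot d v a = 0 ->
    dot d (fun i => b i - dot d a b * a i) v = 0.

(* Hemispheres G = hemi g, H = hemi h are different and not opposite,
   so that G ∩ H is a lune. *)
Definition is_lune (d : nat) (g h : vec) : Prop :=
  on_sphere d g /\ on_sphere d h /\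
  ~ (forall x, hemi d g x <-> hemi d h x) /\
  ~ veq d h (fun i => - g i).

Definition half_bd (d : nat) (g h : vec) (x : vec) : Prop := bd_hemi d g x /\ 0 <= dot d h x.

(* c is the center of the (d-1)-dimensional hemisphere G/H: c lies on the
   great sphere bd(G), and G/H is exactly the set of points of bd(G) at
   spherical distance at most pi/2 from c. *)
Definition is_center_half (d : nat) (g h c : vec) : Prop :=
  bd_hemi d g c /\
  forall x, bd_hemi d g x -> (half_bd d g h x <-> sdist d x c <= PI / 2).

Definition thickness_is (d : nat) (g h : vec) (t : R) : Prop :=
  exists c1 c2, is_center_half d g h c1 /\ is_center_half d h g c2 /\
    t = sdist d c1 c2.

(* Main.v *)
Require Import Defs.
From Stdlib Require Import Reals Lra Psatz.
Open Scope R_scope.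

Lemma dot_sym d x y : dot d x y = dot d y x.
Proof. unfold dot; induction d; simpl; [ring| rewrite IHd; ring]. Qed.

Lemma dot_ext d x y z : (forall i, (i <= d)%nat -> x i = y i) -> dot d x z = dot d y z.
Proof. unfold dot; induction d; intros H; simpl.
- rewrite H; auto.
- rewrite IHd by (intros; apply H; lia). rewrite (H (S d)) by lia. ring. Qed.

Lemma dot2 d a b x y w : dot d (fun i => a * x i + b * y i) w = a * dot d x w + b * dot d y w.
Proof. unfold dot; induction d; simpl; [ring| rewrite IHd; ring]. Qed.

Lemma dot3 d a b e x y z w : dot d (fun i => a * x i + b * y i + e * z i) w
  = a * dot d x w + b * dot d y w + e * dot d z w.
Proof. unfold dot; induction d; simpl; [ring| rewrite IHd; ring]. Qed.

Lemma dot2r d a b x y w : dot d w (fun i => a * x i + b * y i) = a * dot d w x + b * dot d w y.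
Proof. rewrite dot_sym, dot2, (dot_sym d x), (dot_sym d y); ring. Qed.

Lemma dot3r d a b e x y z w : dot d w (fun i => a * x i + b * y i + e * z i)
  = a * dot d w x + b * dot d w y + e * dot d w z.
Proof. rewrite dot_sym, dot3, (dot_sym d x), (dot_sym d y), (dot_sym d z); ring. Qed.

Lemma dot_nonneg d x : 0 <= dot d x x.
Proof. unfold dot; induction d; simpl; nra. Qed.

Lemma dot_zero d x : dot d x x = 0 -> forall i, (i <= d)%nat -> x i = 0.
Proof. unfold dot; induction d; simpl; intros H i Hi.
- assert (i = 0%nat) by lia; subst; nra.
- pose proof (dot_nonneg d x) as N; unfold dot in N.
  assert (x (S d) = 0) by nra.
  destruct (Nat.eq_dec i (S d)); [subst; auto|].
  apply IHd; [nra|lia]. Qed.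

Lemma cs d x y : on_sphere d x -> on_sphere d y -> -1 <= dot d x y <= 1.
Proof. unfold on_sphere; intros Hx Hy.
  pose proof (dot_nonneg d (fun i => 1 * x i + (-1) * y i)) as N1.
  pose proof (dot_nonneg d (fun i => 1 * x i + 1 * y i)) as N2.
  rewrite dot2, !dot2r in N1. rewrite dot2, !dot2r in N2.
  rewrite (dot_sym d x y) in *. lra. Qed.

Lemma acos_le_iff x y : -1 <= x <= 1 -> -1 <= y <= 1 -> (acos x <= acos y <-> y <= x).
Proof. intros Hx Hy. pose proof (acos_bound x); pose proof (acos_bound y).
  split; intro HH.
  - destruct (Rle_lt_dec y x) as [|Hlt]; auto.
    destruct (Req_dec (acos x) (acos y)) as [E|E].
    + rewrite <- (cos_acos x), <- (cos_acos y) by auto. rewrite E; lra.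
    + pose proof (cos_decreasing_1 (acos x) (acos y)) as C.
      rewrite !cos_acos in C by auto. lra.
  - destruct (Rle_lt_dec (acos x) (acos y)); auto.
    pose proof (cos_decreasing_1 (acos y) (acos x)) as C.
    rewrite !cos_acos in C by auto. lra. Qed.

Lemma acos_half x : -1 <= x <= 1 -> (acos x <= PI/2 <-> 0 <= x).
Proof. intros. rewrite <- acos_0. apply acos_le_iff; lra. Qed.

Definition sq (d : nat) (g h : vec) : R := sqrt (1 - (dot d g h)^2).
Definition cen (d : nat) (g h : vec) : vec :=
  fun i => (1 / sq d g h) * h i + (- (dot d g h / sq d g h)) * g i.

Lemma sq_pos d g h : -1 < dot d g h < 1 -> 0 < sq d g h /\ sq d g h * sq d g h = 1 - (dot d g h)^2.
Proof. intros. unfold sq. split. apply sqrt_lt_R0; nra. apply sqrt_sqrt; nra. Qed.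

Lemma cen_ok d g h : on_sphere d g -> on_sphere d h -> -1 < dot d g h < 1 ->
  is_center_half d g h (cen d g h).
Proof. unfold on_sphere; intros Hg Hh Hm.
  destruct (sq_pos d g h Hm) as [Sp Ss].
  set (s := sq d g h) in *. set (m := dot d g h) in *.
  assert (Hb : bd_hemi d g (cen d g h)).
  { unfold bd_hemi, on_sphere, cen. fold s m. split.
    - rewrite dot2, !dot2r. rewrite (dot_sym d h g). fold m. rewrite Hg, Hh.
      apply Rmult_eq_reg_r with (s*s); [|nra]. field_simplify; [|lra]. nra.
    - rewrite dot2r. fold m. rewrite Hg. field. lra. }
  split; auto. intros x [Ux Gx]. unfold half_bd, sdist.
  assert (Cx: dot d x (cen d g h) = dot d h x / s).
  { unfold cen; fold s m. rewrite dot2r, (dot_sym d x g), Gx, (dot_sym d x h). field. lra. }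
  rewrite acos_half by (apply cs; auto; apply Hb).
  rewrite Cx. split; intros H.
  - destruct H as [_ H]. apply Rmult_le_pos; auto. left; apply Rinv_0_lt_compat; auto.
  - split; [split; auto|]. 
    destruct (Rle_lt_dec 0 (dot d h x)); auto.
    exfalso. assert (dot d h x / s < 0). { apply Rmult_lt_reg_r with s; auto. field_simplify; lra. } lra.
Qed.

Lemma cen_unique d g h c : on_sphere d g -> on_sphere d h -> -1 < dot d g h < 1 ->
  is_center_half d g h c -> forall i, (i <= d)%nat -> c i = cen d g h i.
Proof. intros Hg Hh Hm Hc.
  pose proof (cen_ok d g h Hg Hh Hm) as Hs.
  set (e := cen d g h) in *.
  destruct Hc as [[Uc Gc] Pc]. destruct Hs as [[Ue Ge] Pe].
  unfold on_sphere in *.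
  set (s0 := dot d c e).
  assert (S1 : 1 <= s0).
  { destruct (Rle_lt_dec 1 s0) as [|Hlt]; auto. exfalso.
    set (n := sqrt (2 - 2 * s0)).
    assert (Np : 0 < n) by (apply sqrt_lt_R0; lra).
    assert (Nn : n * n = 2 - 2 * s0) by (apply sqrt_sqrt; lra).
    set (x := fun i => (1/n) * c i + (-1/n) * e i).
    assert (Bx : bd_hemi d g x).
    { split; unfold on_sphere, x.
      - rewrite dot2, !dot2r, Uc, Ue. rewrite (dot_sym d e c). fold s0.
        apply Rmult_eq_reg_r with (n*n); [|nra]. field_simplify; lra.
      - rewrite dot2r, Gc, Ge. ring. }
    assert (Xc : dot d x c = (1 - s0) / n).
    { unfold x; rewrite dot2, Uc, (dot_sym d e c); fold s0; field; lra. }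
    assert (Xe : dot d x e = (s0 - 1) / n).
    { unfold x; rewrite dot2, Ue; fold s0; field; lra. }
    pose proof (Pc x Bx) as A. pose proof (Pe x Bx) as B.
    unfold sdist in A, B.
    rewrite acos_half in A by (apply cs; auto; apply Bx).
    rewrite acos_half in B by (apply cs; auto; apply Bx).
    rewrite Xc in A. rewrite Xe in B.
    assert (0 <= (1 - s0)/n) by (unfold Rdiv; apply Rmult_le_pos; [lra| left; apply Rinv_0_lt_compat; auto]).
    assert ((s0 - 1)/n < 0).
    { unfold Rdiv. rewrite Rmult_comm. apply Rmult_lt_reg_l with n; auto.
      rewrite <- Rmult_assoc, Rinv_r by lra. lra. }
    apply A, B in H. lra. }
  assert (S2 : s0 <= 1) by (apply cs; auto).
  assert (Z : dot d (fun i => 1 * c i + (-1) * e i) (fun i => 1 * c i + (-1) * e i) = 0).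
  { rewrite dot2, !dot2r, Uc, Ue, (dot_sym d e c). fold s0. lra. }
  intros i Hi. pose proof (dot_zero _ _ Z i Hi). simpl in H. lra.
Qed.

Lemma cen_dot d g h : on_sphere d g -> on_sphere d h -> -1 < dot d g h < 1 ->
  dot d (cen d g h) (cen d h g) = - dot d g h.
Proof. unfold on_sphere; intros Hg Hh Hm.
  destruct (sq_pos d g h Hm) as [Sp Ss].
  unfold cen. rewrite (dot_sym d h g). unfold sq. rewrite (dot_sym d h g). fold (sq d g h).
  set (s := sq d g h) in *. set (m := dot d g h) in *.
  rewrite dot2, !dot2r, Hg, Hh, (dot_sym d h g). fold m.
  apply Rmult_eq_reg_r with (s*s); [|nra]. field_simplify; [|lra]. nra.
Qed.

Lemma lune_range d g h : is_lune d g h -> -1 < dot d g h < 1.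
Proof. intros [Hg [Hh [N1 N2]]]. pose proof (cs d g h Hg Hh).
  unfold on_sphere in *.
  destruct (Req_dec (dot d g h) 1) as [E|E].
  { exfalso. apply N1.
    assert (Z : dot d (fun i => 1 * g i + (-1) * h i) (fun i => 1 * g i + (-1) * h i) = 0).
    { rewrite dot2, !dot2r, Hg, Hh, (dot_sym d h g), E. lra. }
    assert (Q : forall i, (i <= d)%nat -> g i = h i).
    { intros i Hi. pose proof (dot_zero _ _ Z i Hi). simpl in H0. lra. }
    intros x. unfold hemi. rewrite (dot_ext d g h x Q). tauto. }
  destruct (Req_dec (dot d g h) (-1)) as [E'|E'].
  { exfalso. apply N2.
    assert (Z : dot d (fun i => 1 * g i + 1 * h i) (fun i => 1 * g i + 1 * h i) = 0).
    { rewrite dot2, !dot2r, Hg, Hh, (dot_sym d h g), E'. lra. }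
    intros i Hi. pose proof (dot_zero _ _ Z i Hi). simpl in H0. lra. }
  lra.
Qed.

Lemma thick_val d g h t : is_lune d g h -> thickness_is d g h t -> t = acos (- dot d g h).
Proof. intros L [c1 [c2 [H1 [H2 E]]]]. pose proof (lune_range _ _ _ L) as R.
  destruct L as [Hg [Hh _]]. subst t. unfold sdist.
  assert (R' : -1 < dot d h g < 1) by (rewrite dot_sym; auto).
  rewrite (dot_ext d c1 (cen d g h) c2) by (apply cen_unique; auto).
  rewrite dot_sym.
  rewrite (dot_ext d c2 (cen d h g) (cen d g h)) by (apply cen_unique; auto).
  rewrite dot_sym, cen_dot; auto.
Qed.

Lemma thick_ex d g h : is_lune d g h -> exists t, thickness_is d g h t.
Proof. intros L. pose proof (lune_range _ _ _ L) as R. destruct L as [Hg [Hh _]].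
  assert (R' : -1 < dot d h g < 1) by (rewrite dot_sym; auto).
  exists (sdist d (cen d g h) (cen d h g)). exists (cen d g h), (cen d h g).
  split; [apply cen_ok; auto|]. split; [apply cen_ok; auto|]. auto.
Qed.

Theorem mainTheorem1 (d : nat) (k p q kperp : vec) :
  (2 <= d)%nat ->
  on_sphere d k ->
  bd_hemi d k p ->
  int_hemi d k q ->
  sdist d p q < PI / 2 ->
  (forall x, arc d p q x -> hemi d k x) ->
  arc_orth_at d p q k ->
  on_sphere d kperp ->
  bd_hemi d kperp q ->
  hemi d kperp p ->
  arc_orth_at d q p kperp ->
  is_lune d k kperp /\
  (exists t0, thickness_is d k kperp t0) /\
  (forall m : vec, on_sphere d m -> bd_hemi d m q -> hemi d m p -> is_lune d k m ->
     forall t0 t, thickness_is d k kperp t0 -> thickness_is d k m t -> t0 <= t).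
Proof.
  intros _ Hk [Hp Kp] [Hq Kq] Dpq _ Opq Hkp [_ Kq'] [_ Kp'] Oqp.
  unfold on_sphere in *.
  set (c := dot d p q) in *. set (b := dot d k q) in *.
  assert (Cr : -1 <= c <= 1) by (apply cs; auto).
  assert (Cpos : 0 < c).
  { destruct (Rle_lt_dec c 0) as [Hle|]; auto. exfalso.
    unfold sdist in Dpq. fold c in Dpq. rewrite <- acos_0 in Dpq.
    assert (acos 0 <= acos c) by (apply acos_le_iff; lra). lra. }
  assert (Ek : forall w, dot d q w = c * dot d p w + b * dot d k w).
  { set (r := fun i => 1 * q i + (- c) * p i + (- b) * k i).
    assert (Rk : dot d r k = 0).
    { unfold r. rewrite dot3, Hk, (dot_sym d p k), Kp, (dot_sym d q k). fold b. ring. }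
    assert (Rp : dot d r p = 0).
    { unfold r. rewrite dot3, Hp, Kp. fold c. rewrite (dot_sym d q p). fold c. ring. }
    pose proof (Opq r Rk Rp) as O. fold c in O.
    rewrite (dot_ext d _ (fun i => 1 * q i + (- c) * p i)) in O by (intros; ring).
    rewrite dot2 in O.
    assert (Z : dot d r r = 0).
    { unfold r at 1. rewrite dot3, (dot_sym d k r), Rk. lra. }
    intros w. rewrite (dot_ext d q (fun i => c * p i + b * k i)).
    - apply dot2.
    - intros i Hi. pose proof (dot_zero _ _ Z i Hi). unfold r in H. lra. }
  assert (B2 : c * c + b * b = 1).
  { transitivity (dot d q q); [|exact Hq]. rewrite Ek. fold c b. ring. }
  set (a := dot d p kperp).
  assert (Apos : 0 <= a) by (unfold a; rewrite dot_sym; auto).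
  assert (Ep : forall w, dot d p w = c * dot d q w + a * dot d kperp w).
  { set (r := fun i => 1 * p i + (- c) * q i + (- a) * kperp i).
    assert (Rk : dot d r kperp = 0).
    { unfold r. rewrite dot3, Hkp, (dot_sym d q kperp), Kq'. fold a. ring. }
    assert (Rq : dot d r q = 0).
    { unfold r. rewrite dot3, Hq, Kq'. fold c. ring. }
    pose proof (Oqp r Rk Rq) as O. rewrite (dot_sym d q p) in O. fold c in O.
    rewrite (dot_ext d _ (fun i => 1 * p i + (- c) * q i)) in O by (intros; ring).
    rewrite dot2 in O.
    assert (Z : dot d r r = 0).
    { unfold r at 1. rewrite dot3, (dot_sym d kperp r), Rk. lra. }
    intros w. rewrite (dot_ext d p (fun i => c * q i + a * kperp i)).
    - apply dot2.
    - intros i Hi. pose proof (dot_zero _ _ Z i Hi). unfold r in H. lra. }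
  assert (A2 : c * c + a * a = 1).
  { transitivity (dot d p p); [|exact Hp]. rewrite Ep. fold a. rewrite (dot_sym d q p). fold c. rewrite (dot_sym d kperp p). fold a. ring. }
  assert (Ab : a = b) by nra.
  assert (KK : dot d k kperp = - c).
  { pose proof (Ep k) as E. rewrite (dot_sym d p k), Kp, (dot_sym d q k) in E. fold b in E.
    rewrite (dot_sym d kperp k) in E. rewrite Ab in E. 
    apply Rmult_eq_reg_l with b; nra. }
  assert (Lu : is_lune d k kperp).
  { split; [auto|]. split; [auto|]. split.
    - intros H. destruct (proj1 (H k)) as [_ X]. split; auto; lra.
      rewrite dot_sym, KK in X. lra.
    - intros V. pose proof KK as K2. rewrite dot_sym in K2.
      rewrite (dot_ext d kperp (fun i => (-1) * k i + 0 * k i)) in K2.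
      + rewrite dot2, Hk in K2. nra.
      + intros i Hi. rewrite V by auto. ring. }
  split; [exact Lu|]. split; [apply thick_ex; auto|].
  intros m Hm [_ Mq] [_ Mp] Lm t0 t T0 T.
  apply thick_val in T0; auto. apply thick_val in T; auto.
  subst t0 t. rewrite KK, Ropp_involutive.
  assert (MP : dot d p m <= b).
  { rewrite Ep, (dot_sym d q m), Mq, <- Ab. pose proof (cs d kperp m Hkp Hm). nra. }
  assert (MQ : c * dot d p m + b * dot d k m = 0).
  { rewrite <- Ek, dot_sym; auto. }
  pose proof (cs d k m Hk Hm).
  apply acos_le_iff; try lra.
  rewrite (dot_sym d m p) in Mp. nra.
Qed.
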